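(* Let $\mathcal R$ be a confluent CCTRS, let $\rho\colon \ell\to r\Leftarrow a_1\approx b_1,\dots,a_k\approx b_k$ be a rule of $\mathcal R$, and let $\sigma$ be a substitution with $\mathrm{dom}(\sigma)\subseteq\mathrm{Var}(\ell)$ such that $\ell\sigma$ is quasi-decreasing. Then $\rho$ is not applicable to $\ell\sigma$ if and only if there exist an extension $\sigma'$ of $\sigma$ and an index $1\le i\le k$ such that $a_j\sigma'\to^*_{\mathcal R} b_j\sigma'$ for all $1\le j<i$ and $a_i\sigma'\to^*_{\mathcal R} u$ for some normal form $u$ which is not an instance of $b_i$.
   Context: Terms are built from a signature $\mathcal F$ and variables $\mathcal V$. An (oriented) conditional rewrite rule has the form $\ell\to r\Leftarrow a_1\approx b_1,\dots,a_k\approx b_k$ with $k\ge 0$. For a set $\mathcal R$ of such rules, $\to_{\mathcal R}=\bigcup_{i}\to_{\mathcal R_i}$ where $\mathcal R_0=\emptyset$ and $\mathcal R_{i+1}=\{\ell\sigma\to r\sigma\mid (\ell\to r\Leftarrow c)\in\mathcal R,\ a_j\sigma\to^*_{\mathcal R_i}b_j\sigma \text{ for all } j\}$; equivalently $s\to t$ iff there are a position $p$, a rule and a substitution $\sigma$ with $s|_p=\ell\sigma$, $t=s[r\sigma]_p$ and $a_j\sigma\to^*b_j\sigma$ for all $j$ (written $\mathcal R\vdash c\sigma$). Defined symbols are the root symbols of left-hand sides; all other symbols are constructors; constructor terms contain only constructors and variables. A CCTRS is such a system in which every rule has the form $f(\ell_1,\dots,\ell_n)\to r\Leftarrow a_1\approx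 b_1,\dots,a_k\approx b_k$ where $\ell_1,\dots,\ell_n,b_1,\dots,b_k$ are constructor terms, the terms $f(\ell_1,\dots,\ell_n),b_1,\dots,b_k$ pairwise have no common variables, $\mathrm{Var}(r)\subseteq\mathrm{Var}(\ell_1,\dots,\ell_n,b_1,\dots,b_k)$, and $\mathrm{Var}(a_i)\subseteq\mathrm{Var}(\ell_1,\dots,\ell_n,b_1,\dots,b_{i-1})$ for all $1\le i\le k$. A normal form is a term $s$ with no $t$ such that $s\to t$. The rule $\rho$ is applicable to $\ell\sigma$ if there is an extension $\tau$ of $\sigma$ with $a_j\tau\to^* b_j\tau$ for all $1\le j\le k$. Write $s\sqsupset t$ if there are a position $p$, a rule $\ell\to r\Leftarrow a_1\approx b_1,\dots,a_k\approx b_k$, a substitution $\sigma$ and $1\le i\le k$ with $s|_p=\ell\sigma$, $a_j\sigma\to^* b_j\sigma$ for $1\le j<i$ and $t=a_i\sigma$. A term $s$ is quasi-decreasing if there is no infinite sequence $s=u_0\,(\to\cup\sqsupset)\,u_1\,(\to\cup\sqsupset)\,u_2\cdots$. *)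

(* Defs.v *)
From Stdlib Require Import List Arith.
Import ListNotations.
Set Implicit Arguments.

Section CTRS.
Variables F V : Type.

(* Terms over signature F and variables V (arities are not enforced). *)
Inductive term : Type :=
| Var (x : V)
| Fun (f : F) (args : list term).

Fixpoint subst (s : V -> term) (t : term) : term :=
  match t with
  | Var x => s x
  | Fun f args => Fun f (map (subst s) args)
  end.

Inductive occurs (x : V) : term -> Prop :=
| occ_var : occurs x (Var x)
| occ_fun f args t : In t args -> occurs x t -> occurs x (Fun f args).

Inductive subterm_eq : term -> term -> Prop :=
| st_refl s : subterm_eq s s
| st_arg f args t u : In t args -> subterm_eq u t -> subterm_eq u (Fun f args).

(* An oriented conditional rule  l -> r <= a_1 ~ b_1, ..., a_k ~ b_k ;
   conditions are stored as pairs (a_i, b_i), 0-indexed. *)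
Record rule : Type := mkRule {
  lhs : term;
  rhs : term;
  conds : list (term * term)
}.

Variable R : rule -> Prop.

Inductive step : term -> term -> Prop :=
| step_root (rho : rule) (s : V -> term) :
    R rho ->
    (forall c, In c (conds rho) -> steps (subst s (fst c)) (subst s (snd c))) ->
    step (subst s (lhs rho)) (subst s (rhs rho))
| step_ctx f l1 u v l2 :
    step u v -> step (Fun f (l1 ++ u :: l2)) (Fun f (l1 ++ v :: l2))
with steps : term -> term -> Prop :=
| steps_refl t : steps t t
| steps_step t u v : step t u -> steps u v -> steps t v.

Definition confluent : Prop :=
  forall s t1 t2, steps s t1 -> steps s t2 ->
    exists u, steps t1 u /\ steps t2 u.

Definition normal_form (u : term) : Prop := ~ exists t, step u t.

Definition instance (u b : term) : Prop := exists th, u = subst th b.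

Definition defined (f : F) : Prop :=
  exists rho args, R rho /\ lhs rho = Fun f args.

Definition constructor_term (t : term) : Prop :=
  forall f args, subterm_eq (Fun f args) t -> ~ defined f.

Definition no_common_vars (ts : list term) : Prop :=
  forall i j ti tj x, i <> j -> nth_error ts i = Some ti -> nth_error ts j = Some tj ->
    occurs x ti -> occurs x tj -> False.

Definition cctrs_rule (rho : rule) : Prop :=
  exists f ls, lhs rho = Fun f ls /\
    (forall l, In l ls -> constructor_term l) /\
    (forall c, In c (conds rho) -> constructor_term (snd c)) /\
    no_common_vars (lhs rho :: map snd (conds rho)) /\
    (forall x, occurs x (rhs rho) ->
       occurs x (lhs rho) \/ exists c, In c (conds rho) /\ occurs x (snd c)) /\
    (forall i c x, nth_error (conds rho) i = Some c -> occurs x (fst c) ->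
       occurs x (lhs rho) \/
       exists j c', j < i /\ nth_error (conds rho) j = Some c' /\ occurs x (snd c')).

Definition CCTRS : Prop := forall rho, R rho -> cctrs_rule rho.

Definition sqsup (s t : term) : Prop :=
  exists u rho (sg : V -> term) i c,
    subterm_eq u s /\ R rho /\ u = subst sg (lhs rho) /\
    nth_error (conds rho) i = Some c /\
    (forall j c', j < i -> nth_error (conds rho) j = Some c' ->
       steps (subst sg (fst c')) (subst sg (snd c'))) /\
    t = subst sg (fst c).

Definition quasi_decreasing (s : term) : Prop :=
  ~ exists u : nat -> term, u 0 = s /\
      forall n, step (u n) (u (S n)) \/ sqsup (u n) (u (S n)).

End CTRS.

Definition extends {F V : Type} (l : term F V) (sg tau : V -> term F V) : Prop :=
  forall x, occurs x l -> tau x = sg x.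

Definition applicable {F V : Type} (R : rule F V -> Prop) (rho : rule F V)
  (sg : V -> term F V) : Prop :=
  exists tau, extends (lhs rho) sg tau /\
    forall c, In c (conds rho) -> steps R (subst tau (fst c)) (subst tau (snd c)).

(* Main.v *)
Require Import Defs.
From Stdlib Require Import List Arith Lia Classical ClassicalEpsilon.
Import ListNotations.

Section H.
Context {F V : Type}.
Variable R : rule F V -> Prop.

Lemma term_ind' (P : term F V -> Prop) :
  (forall x, P (Var F x)) ->
  (forall f args, (forall t, In t args -> P t) -> P (Fun f args)) ->
  forall t, P t.
Proof.
  intros HV HF. fix IH 1. intros [x|f args]. apply HV. apply HF.
  revert args. fix IH2 1. intros [|a args] t Ht. destruct Ht.
  destruct Ht as [Ht|Ht]. subst t. apply IH. exact (IH2 args t Ht).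
Qed.

Lemma subst_ext (s1 s2 : V -> term F V) t :
  (forall x, occurs x t -> s1 x = s2 x) -> subst s1 t = subst s2 t.
Proof.
  revert s1 s2. induction t as [x|f args IH] using term_ind'; intros s1 s2 H; simpl.
  - apply H. constructor.
  - f_equal. apply map_ext_in. intros a Ha. apply IH; auto.
    intros x Hx. apply H. econstructor; eauto.
Qed.

Lemma steps_trans s t u : steps R s t -> steps R t u -> steps R s u.
Proof. induction 1; intros; auto. econstructor; eauto. Qed.

Lemma steps_one s t : step R s t -> steps R s t.
Proof. intros; econstructor; eauto; constructor. Qed.

Lemma steps_ctx f l1 u v l2 : steps R u v ->
  steps R (Fun f (l1 ++ u :: l2)) (Fun f (l1 ++ v :: l2)).
Proof. induction 1. constructor. econstructor. apply step_ctx; eauto. auto. Qed.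

Lemma steps_args f (g h : term F V -> term F V) args : forall l1,
  (forall t, In t args -> steps R (g t) (h t)) ->
  steps R (Fun f (l1 ++ map g args)) (Fun f (l1 ++ map h args)).
Proof.
  induction args as [|a args IH]; intros l1 H; simpl. constructor.
  eapply steps_trans. apply steps_ctx. apply H; left; auto.
  specialize (IH (l1 ++ [h a])). rewrite <- !app_assoc in IH. apply IH.
  intros; apply H; right; auto.
Qed.

Lemma steps_subst (s1 s2 : V -> term F V) t :
  (forall x, occurs x t -> steps R (s1 x) (s2 x)) -> steps R (subst s1 t) (subst s2 t).
Proof.
  induction t as [x|f args IH] using term_ind'; intros H; simpl.
  - apply H. constructor.
  - apply (steps_args f (subst s1) (subst s2) args []). intros a Ha.
    apply IH; auto. intros x Hx. apply H. econstructor; eauto.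
Qed.

Inductive Inst (P : V -> term F V -> Prop) : term F V -> term F V -> Prop :=
| I_var x w : P x w -> Inst P (Var F x) w
| I_fun f bs ws : Forall2 (Inst P) bs ws -> Inst P (Fun f bs) (Fun f ws).

Lemma Forall2_In_l {A B} (Q : A -> B -> Prop) l1 l2 a :
  Forall2 Q l1 l2 -> In a l1 -> exists b, In b l2 /\ Q a b.
Proof.
  induction 1; intros Ha. destruct Ha.
  destruct Ha as [<-|Ha]. exists y; split; auto. left; auto.
  destruct (IHForall2 Ha) as [b [? ?]]. exists b; split; auto. right; auto.
Qed.

Lemma Forall2_map {A B} (Q : A -> B -> Prop) (f : A -> B) l :
  (forall a, In a l -> Q a (f a)) -> Forall2 Q l (map f l).
Proof. induction l; simpl; constructor; auto. Qed.

Lemma constructor_sub t f args : constructor_term R (Fun f args) -> In t args ->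
  constructor_term R t.
Proof. intros H Ht g a Hs. apply (H g a). econstructor; eauto. Qed.

Lemma inst_step (P : V -> term F V -> Prop) :
  CCTRS R ->
  (forall x w w', P x w -> step R w w' -> P x w') ->
  forall b, constructor_term R b -> forall w w', Inst P b w -> step R w w' -> Inst P b w'.
Proof.
  intros HC HP b. induction b as [x|f bs IH] using term_ind'; intros Hb w w' HI Hs.
  - inversion HI; subst. constructor. eauto.
  - inversion HI as [|f0 bs0 ws HF]; subst.
    remember (Fun f ws) as w0 eqn:Ew. destruct Hs as [rho s HR Hc | g l1 u v l2 Huv].
    + exfalso. destruct (HC rho HR) as [g [ls [Hl _]]].
      rewrite Hl in Ew. simpl in Ew. injection Ew as Efg _.
      apply (Hb g bs). rewrite Efg. constructor. exists rho, ls; auto.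
    + injection Ew as -> Ews. subst ws.
      apply Forall2_app_inv_r in HF. destruct HF as [bs1 [bs2 [H1 [H2 ->]]]].
      inversion H2 as [|b0 u0 bs3 l3 Hb0 H3]; subst.
      constructor. apply Forall2_app; auto. constructor; auto.
      apply IH with u; auto. apply in_or_app; right; left; auto.
      apply (constructor_sub _ f (bs1 ++ b0 :: bs3)); auto. apply in_or_app; right; left; auto.
Qed.

Lemma inst_steps (P : V -> term F V -> Prop) :
  CCTRS R ->
  (forall x w w', P x w -> step R w w' -> P x w') ->
  forall b, constructor_term R b -> forall w w', Inst P b w -> steps R w w' -> Inst P b w'.
Proof.
  intros HC HP b Hb w w' HI Hs. revert HI. induction Hs; auto.
  intros. apply IHHs. eapply inst_step; eauto.
Qed.

Lemma inst_refl (tau : V -> term F V) b :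
  Inst (fun x w => steps R (tau x) w) b (subst tau b).
Proof.
  induction b as [x|f bs IH] using term_ind'; simpl. constructor. constructor.
  constructor. apply Forall2_map. auto.
Qed.

Lemma inst_occurs P b w x : Inst P b w -> occurs x b -> exists w', P x w'.
Proof.
  revert w. induction b as [y|f bs IH] using term_ind'; intros w HI Ho.
  - inversion HI; inversion Ho; subst; eauto.
  - inversion HI as [|f0 bs0 ws HF]; subst. inversion Ho as [|f1 a t Ht Hot]; subst.
    destruct (Forall2_In_l _ _ _ _ HF Ht) as [w1 [_ Hw1]]. eauto.
Qed.

Lemma inst_and P Q b w : Inst P b w -> Inst Q b w -> Inst (fun x w => P x w /\ Q x w) b w.
Proof.
  revert w. induction b as [y|f bs IH] using term_ind'; intros w H1 H2.
  - inversion H1; inversion H2; subst. constructor; auto.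
  - inversion H1 as [|f0 bs0 ws HF]; subst. inversion H2 as [|f1 bs1 ws1 HG]; subst.
    constructor. clear H1 H2. revert ws HF HG. induction bs as [|b bs IHb]; intros ws HF HG.
    + inversion HF; constructor.
    + inversion HF; subst; inversion HG; subst. constructor.
      apply IH; [left; auto | assumption | assumption].
      apply IHb; auto. intros; apply IH; auto. right; auto.
Qed.

Lemma nf_arg f args t : normal_form R (Fun f args) -> In t args -> normal_form R t.
Proof.
  intros H Ht [t' Hs]. apply H. apply in_split in Ht. destruct Ht as [l1 [l2 ->]].
  eexists. apply step_ctx. eauto.
Qed.

Lemma inst_nf P b w : Inst P b w -> normal_form R w ->
  Inst (fun x w => P x w /\ normal_form R w) b w.
Proof.
  revert w. induction b as [y|f bs IH] using term_ind'; intros w H1 Hn.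
  - inversion H1; subst. constructor; auto.
  - inversion H1 as [|f0 bs0 ws HF]; subst. constructor.
    assert (Hn' : forall t, In t ws -> normal_form R t) by (intros; eapply nf_arg; eauto).
    clear H1 Hn. revert ws HF Hn'. induction bs as [|b bs IHb]; intros ws HF Hn'.
    + inversion HF; constructor.
    + inversion HF; subst. constructor.
      apply IH; auto. left; auto. apply Hn'; left; auto.
      apply IHb; auto. intros; apply IH; auto. right; auto. intros; apply Hn'; right; auto.
Qed.

Lemma inst_instance P b w : (forall x w1 w2, P x w1 -> P x w2 -> w1 = w2) ->
  Inst P b w -> instance w b.
Proof.
  intros Hf HI.
  set (th := fun x => epsilon (inhabits (Var F x)) (P x)).
  exists th. revert w HI. induction b as [y|f bs IH] using term_ind'; intros w HI.
  - inversion HI; subst. simpl. apply (Hf y); auto. unfold th. apply epsilon_spec. eauto.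
  - inversion HI as [|f0 bs0 ws HF]; subst. simpl. f_equal.
    clear HI. revert ws HF. induction bs as [|b bs IHb]; intros ws HF.
    + inversion HF; auto.
    + inversion HF; subst. simpl. f_equal. apply IH; auto. left; auto.
      apply IHb; auto. intros; apply IH; auto. right; auto.
Qed.

Lemma nf_steps s t : normal_form R s -> steps R s t -> s = t.
Proof. intros H Hs. destruct Hs; auto. exfalso; apply H; eauto. Qed.


Definition J s t := exists w, steps R s w /\ steps R t w.

Lemma J_subst (tau sg : V -> term F V) t :
  (forall x, occurs x t -> J (tau x) (sg x)) -> J (subst tau t) (subst sg t).
Proof.
  intros H.
  set (th := fun x => epsilon (inhabits (Var F x)) (fun w => steps R (tau x) w /\ steps R (sg x) w)).
  assert (Hth : forall x, occurs x t -> steps R (tau x) (th x) /\ steps R (sg x) (th x)).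
  { intros x Hx. unfold th. apply epsilon_spec. apply H; auto. }
  exists (subst th t). split; apply steps_subst; intros x Hx; apply Hth; auto.
Qed.

Lemma clos (tau : V -> term F V) :
  forall x w w', steps R (tau x) w -> step R w w' -> steps R (tau x) w'.
Proof. intros x w w' H Hs. eapply steps_trans; eauto. apply steps_one; auto. Qed.

Lemma back (HC : CCTRS R) (Hconf : confluent R) rho (HR : R rho) sigma sg' tau i c u :
  extends (lhs rho) sigma sg' -> extends (lhs rho) sigma tau ->
  nth_error (conds rho) i = Some c ->
  (forall j c', j < i -> nth_error (conds rho) j = Some c' ->
     steps R (subst sg' (fst c')) (subst sg' (snd c'))) ->
  (forall c, In c (conds rho) -> steps R (subst tau (fst c)) (subst tau (snd c))) ->
  steps R (subst sg' (fst c)) u -> normal_form R u -> instance u (snd c).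
Proof.
  intros Hsg' Htau Hn Hprev Htc Hsu Hnf.
  destruct (HC rho HR) as [f [ls [Hl [Hls [Hb [Hnc [Hr Ha]]]]]]].
  assert (Inv : forall j, j <= i -> forall x, (occurs x (lhs rho) \/ exists j' c',
     j' < j /\ nth_error (conds rho) j' = Some c' /\ occurs x (snd c')) -> J (tau x) (sg' x)).
  { induction j; intros Hj x Hx.
    - destruct Hx as [Hx | [j' [c' [Hlt _]]]]; [|lia].
      rewrite (Hsg' x Hx), (Htau x Hx). exists (sigma x); split; constructor.
    - destruct Hx as [Hx | [j' [c' [Hlt [Hn' Ho]]]]]. apply IHj; [lia| left; auto].
      destruct (Nat.eq_dec j' j) as [->|Hne].
      2: { apply IHj; [lia | right; exists j', c'; split; [lia|auto]]. }
      assert (Ja : J (subst tau (fst c')) (subst sg' (fst c'))).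
      { apply J_subst. intros y Hy. apply IHj; [lia|]. exact (Ha j c' y Hn' Hy). }
      destruct Ja as [w0 [Hw0a Hw0b]].
      assert (Hta := Htc c' (nth_error_In _ _ Hn')).
      assert (Hsa := Hprev j c' ltac:(lia) Hn').
      destruct (Hconf _ _ _ Hta Hw0a) as [w1 [Hbw1 Hw0w1]].
      destruct (Hconf _ _ _ Hsa (steps_trans _ _ _ Hw0b Hw0w1)) as [w2 [Hbw2 Hw1w2]].
      assert (Hcb : constructor_term R (snd c')) by (apply Hb; eapply nth_error_In; eauto).
      assert (I1 := inst_steps (fun x w => steps R (tau x) w) HC (clos tau) (snd c') Hcb _ _
                      (inst_refl tau (snd c')) (steps_trans _ _ _ Hbw1 Hw1w2)).
      assert (I2 := inst_steps (fun x w => steps R (sg' x) w) HC (clos sg') (snd c') Hcb _ _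
                      (inst_refl sg' (snd c')) Hbw2).
      destruct (inst_occurs _ _ _ _ (inst_and _ _ _ _ I1 I2) Ho) as [w' [? ?]].
      exists w'; auto. }
  assert (Ja : J (subst tau (fst c)) (subst sg' (fst c))).
  { apply J_subst. intros y Hy. apply (Inv i); [lia|]. exact (Ha i c y Hn Hy). }
  destruct Ja as [w0 [Hw0a Hw0b]].
  destruct (Hconf _ _ _ Hsu Hw0b) as [z [Huz Hw0z]].
  apply nf_steps in Huz; auto. subst z.
  assert (Htu := steps_trans _ _ _ Hw0a Hw0z).
  assert (Hta := Htc c (nth_error_In _ _ Hn)).
  destruct (Hconf _ _ _ Hta Htu) as [z [Hbz Huz]].
  apply nf_steps in Huz; auto. subst z.
  assert (Hcb : constructor_term R (snd c)) by (apply Hb; eapply nth_error_In; eauto).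
  assert (I1 := inst_steps (fun x w => steps R (tau x) w) HC (clos tau) (snd c) Hcb _ _
                      (inst_refl tau (snd c)) Hbz).
  apply (fun H => inst_instance _ _ _ H (inst_nf _ _ _ I1 Hnf)).
  intros x w1 w2 [H1 N1] [H2 N2]. destruct (Hconf _ _ _ H1 H2) as [z [A B]].
  apply nf_steps in A; auto. apply nf_steps in B; auto. congruence.
Qed.

Lemma nf_exists t :
  ~ (exists u : nat -> term F V, u 0 = t /\ forall n, step R (u n) (u (S n))) ->
  exists w, steps R t w /\ normal_form R w.
Proof.
  intros H. apply NNPP. intros Hn. apply H.
  assert (Hr : forall w, steps R t w -> exists w', step R w w').
  { intros w Hw. apply NNPP. intros Hw'. apply Hn. exists w; split; auto. }
  set (nxt := fun w => epsilon (inhabits w) (fun w' => step R w w')).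
  assert (Hu : forall n, steps R t (Nat.iter n nxt t)).
  { induction n. constructor. simpl. eapply steps_trans; [exact IHn|].
    apply steps_one. unfold nxt. apply epsilon_spec. apply Hr; auto. }
  exists (fun n => Nat.iter n nxt t). split; auto.
  intros n. simpl. unfold nxt at 1. apply epsilon_spec. apply Hr; auto.
Qed.

Lemma fwd (HC : CCTRS R) rho (HR : R rho) sigma
  (HQ : quasi_decreasing R (subst sigma (lhs rho))) :
  forall j, j <= length (conds rho) ->
  (exists (sigma' : V -> term F V) (i : nat) (c : term F V * term F V),
     extends (lhs rho) sigma sigma' /\
     nth_error (conds rho) i = Some c /\
     (forall j c', j < i -> nth_error (conds rho) j = Some c' ->
        steps R (subst sigma' (fst c')) (subst sigma' (snd c'))) /\
     exists u, steps R (subst sigma' (fst c)) u /\ normal_form R u /\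
       ~ instance u (snd c)) \/
  exists sj, extends (lhs rho) sigma sj /\ forall j' c', j' < j ->
     nth_error (conds rho) j' = Some c' -> steps R (subst sj (fst c')) (subst sj (snd c')).
Proof.
  destruct (HC rho HR) as [f [ls [Hl [Hls [Hb [Hnc [Hr Ha]]]]]]].
  induction j; intros Hj.
  { right; exists sigma; split. intros x _; reflexivity. intros; lia. }
  destruct (IHj ltac:(lia)) as [H|[sj [Hext Hprev]]]; [left; auto|].
  destruct (nth_error (conds rho) j) as [c|] eqn:Hn.
  2: { exfalso; apply nth_error_None in Hn; lia. }
  assert (Hnf : exists w, steps R (subst sj (fst c)) w /\ normal_form R w).
  { apply nf_exists. intros [u [Hu0 Hu]]. apply HQ.
    exists (fun n => match n with 0 => subst sigma (lhs rho) | S m => u m end). split; auto.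
    intros [|n].
    - right. exists (subst sigma (lhs rho)), rho, sj, j, c.
      split; [constructor|]. split; [exact HR|].
      split; [apply subst_ext; intros; symmetry; apply Hext; auto|].
      split; [exact Hn|]. split; [intros j0 c0 H0 H1; exact (Hprev j0 c0 H0 H1) | exact Hu0].
    - left. apply Hu. }
  destruct Hnf as [w [Hw Hwn]].
  destruct (classic (instance w (snd c))) as [[th Hth]|Hni].
  2: { left. exists sj, j, c. repeat split; auto. exists w; auto. }
  right.
  set (sj' := fun x => if excluded_middle_informative (occurs x (snd c)) then th x else sj x).
  assert (Hdisj0 : forall x, occurs x (lhs rho) -> ~ occurs x (snd c)).
  { intros x H1 H2. apply (Hnc 0 (S j) (lhs rho) (snd c) x); [lia|reflexivity| |exact H1|exact H2].
    change (nth_error (map snd (conds rho)) j = Some (snd c)). rewrite nth_error_map, Hn. reflexivity. }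
  assert (Hdisj : forall x j' c', j' < j -> nth_error (conds rho) j' = Some c' ->
            occurs x (snd c') -> ~ occurs x (snd c)).
  { intros x j' c' Hlt Hn' H1 H2. apply (Hnc (S j') (S j) (snd c') (snd c) x); [lia| | |exact H1|exact H2].
    change (nth_error (map snd (conds rho)) j' = Some (snd c')). rewrite nth_error_map, Hn'. reflexivity.
    change (nth_error (map snd (conds rho)) j = Some (snd c)). rewrite nth_error_map, Hn. reflexivity. }
  assert (Hdisja : forall x j' c', j' <= j -> nth_error (conds rho) j' = Some c' ->
            occurs x (fst c') -> ~ occurs x (snd c)).
  { intros x j' c' Hle Hn' Ho. destruct (Ha j' c' x Hn' Ho) as [H1|[j'' [c'' [Hlt [Hn'' Ho'']]]]].
    apply Hdisj0; auto. eapply Hdisj; eauto. lia. }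
  assert (Hout : forall x, ~ occurs x (snd c) -> sj' x = sj x).
  { intros x Hx. unfold sj'. destruct excluded_middle_informative; tauto. }
  assert (Hin : forall x, occurs x (snd c) -> sj' x = th x).
  { intros x Hx. unfold sj'. destruct excluded_middle_informative; tauto. }
  exists sj'. split.
  { intros x Hx. rewrite Hout by (apply Hdisj0; auto). apply Hext; auto. }
  intros j' c' Hlt Hn'.
  rewrite (subst_ext sj' sj (fst c')) by (intros y Hy; apply Hout; apply (Hdisja y j' c'); [lia|exact Hn'|exact Hy]).
  destruct (Nat.eq_dec j' j) as [->|Hne].
  - rewrite Hn in Hn'; injection Hn' as <-.
    rewrite (subst_ext sj' th (snd c)) by (intros; apply Hin; auto). rewrite <- Hth; auto.
  - rewrite (subst_ext sj' sj (snd c')) by (intros y Hy; apply Hout; apply (Hdisj y j' c'); [lia|exact Hn'|exact Hy]).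
    apply (Hprev j' c'); [lia|exact Hn'].
Qed.

End H.

Theorem lemma3p2 (F V : Type) (R : rule F V -> Prop) (rho : rule F V)
  (sigma : V -> term F V) :
  CCTRS R -> confluent R -> R rho ->
  (forall x, sigma x <> Var F x -> occurs x (lhs rho)) ->
  quasi_decreasing R (subst sigma (lhs rho)) ->
  (~ applicable R rho sigma <->
   exists (sigma' : V -> term F V) (i : nat) (c : term F V * term F V),
     extends (lhs rho) sigma sigma' /\
     nth_error (conds rho) i = Some c /\
     (forall j c', j < i -> nth_error (conds rho) j = Some c' ->
        steps R (subst sigma' (fst c')) (subst sigma' (snd c'))) /\
     exists u, steps R (subst sigma' (fst c)) u /\ normal_form R u /\
       ~ instance u (snd c)).
Proof.
  intros HC Hconf HR _ HQ. split.
  - intros Hna. destruct (fwd R HC rho HR sigma HQ (length (conds rho)) (le_n _))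
      as [H|[sj [Hext Hall]]]; auto.
    exfalso; apply Hna. exists sj; split; auto. intros c Hc.
    apply In_nth_error in Hc as [n Hn]. apply Hall with n; auto.
    apply nth_error_Some; congruence.
  - intros [sg' [i [c [Hext [Hn [Hprev [u [Hu [Hnf Hni]]]]]]]]] [tau [Htau Hall]].
    apply Hni. exact (back R HC Hconf rho HR sigma sg' tau i c u Hext Htau Hn Hprev Hall Hu Hnf).
Qed.
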